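(* Let $\theta$ be a $\mathbb C$-linear operator on $\Lambda$. Then $E^a\theta=\theta E^a$ for all $a\in\mathbb C$ if and only if $\theta$ is a complex formal power series in the iterated symmetric derivatives $\mathbf D_1,\mathbf D_2,\dots$. That is, if and only if there are complex numbers $c_k$, indexed by finitely supported sequences $k=(k_1,k_2,\dots)$ of nonnegative integers, such that $\theta p=\sum_k c_k\mathbf D_1^{k_1}\mathbf D_2^{k_2}\cdots p$ for every $p\in\Lambda$.
   Context: $\Lambda$ is the algebra of symmetric functions with complex coefficients in the variables $\mathbf y=(y_1,y_2,\dots)$, with basis the monomial symmetric functions $m_\lambda(\mathbf y)$, $\lambda$ ranging over partitions. For $i\ge1$, the $i$-th symmetric derivative $\mathbf D_i$ is the linear operator on $\Lambda$ given by: - $\mathbf D_i m_\lambda=i!\,m_{\lambda\setminus i}$ if $i$ is a part of $\lambda$, where $\lambda\setminus i$ removes one part equal to $i$; - $\mathbf D_i m_\lambda=0$ otherwise. For $a\in\mathbb C$, the symmetric shift $E^a$ is the operator $E^ap(y_1,y_2,\dots)=p(a,y_1,y_2,\dots)$. For each $p$ only finitely many terms of the formal series act nonzero, so the series is well defined. *)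

(* Defs.v *)
From HB Require Import structures.
From mathcomp Require Import all_boot all_order all_algebra.
From mathcomp Require Import reals.
From mathcomp Require Import complex.
From mathcomp Require Import finmap.
From mathcomp.multinomials Require Import monalg.
From Stdlib Require Import ClassicalEpsilon.

Set Implicit Arguments.
Unset Strict Implicit.
Unset Printing Implicit Defensive.
Import GRing.Theory Num.Theory.
Local Open Scope ring_scope.

Definition is_part (s : seq nat) : bool :=
  sorted geq s && all (fun x => 0 < x)%N s.

Record partition := Part { pval :> seq nat; pvalP : is_part pval }.
HB.instance Definition _ := [isSub for pval].
HB.instance Definition _ := [Countable of partition by <:].

Lemma topart_proof (s : seq nat) :
  is_part (sort geq [seq x <- s | (0 < x)%N]).
Proof.
apply/andP; split.
  apply: sort_sorted => x y; exact: leq_total.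
by rewrite all_sort; apply/allP => x; rewrite mem_filter => /andP[].
Qed.

Definition topart (s : seq nat) : partition := Part (topart_proof s).

(* The ring of symmetric functions Λ over ℂ, as the free ℂ-vector space
   with basis the monomial symmetric functions m_λ (λ a partition):
   an element p is the finitely supported coefficient map λ ↦ p@_λ,
   i.e. p = Σ_λ p@_λ m_λ.  ℂ is modelled as R[i] for an arbitrary
   R : realType (every realType is isomorphic to ℝ). *)
Definition Lam (R : realType) := {malg R[i][partition]}.

(* m_λ(y_1,…,y_n): sum over all distinct rearrangements α of λ padded
   with zeros to length n of y^α (zero if λ has more than n parts). *)
Definition m_eval (R : realType) (la : partition) (ys : seq R[i]) : R[i] :=
  if (size la <= size ys)%N then
    \sum_(al <- permutations (pval la ++ nseq (size ys - size la) 0%N))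
       \prod_(j < size ys) ys`_j ^+ nth 0%N al j
  else 0.

(* p(y_1,…,y_n) = Σ_λ p@_λ m_λ(y_1,…,y_n): specialization of p to
   finitely many variables (the others set to 0). *)
Definition ev (R : realType) (p : Lam R) (ys : seq R[i]) : R[i] :=
  \sum_(la <- msupp p) p@_la * m_eval la ys.

(* Symmetric shift: E^a p is the symmetric function q with
   q(y_1,y_2,…) = p(a,y_1,y_2,…), i.e. q(y_1..y_n) = p(a,y_1..y_n) for
   every n and every y (a symmetric function is determined by these
   finite-variable specializations). *)
Definition Eshift (R : realType) (a : R[i]) (p : Lam R) : Lam R :=
  epsilon (inhabits 0) (fun q : Lam R => forall ys, ev q ys = ev p (a :: ys)).

Definition Dsym (R : realType) (i : nat) (p : Lam R) : Lam R :=
  \sum_(la <- msupp p)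
     (p@_la * (i`!)%:R) *: (if i \in pval la then << topart (rem i la) >> else 0).

(* finitely supported sequences k = (k_1,k_2,…) of naturals, represented
   canonically as finite lists without trailing zeros *)
Definition canon (k : seq nat) : bool := last 1%N k != 0%N.

(* D^k p = D_1^{k_1} D_2^{k_2} ⋯ p *)
Definition Dpow (R : realType) (k : seq nat) (p : Lam R) : Lam R :=
  foldr (fun ik q => iter ik.2 (Dsym ik.1) q) p (zip (iota 1 (size k)) k).

(* Main.v *)
Require Import Defs.
From HB Require Import structures.
From mathcomp Require Import all_boot all_order all_algebra.
From mathcomp Require Import reals complex.
From mathcomp Require Import finmap.
From mathcomp.multinomials Require Import monalg.
From Stdlib Require Import ClassicalEpsilon.
From mathcomp Require Import zify.
Import GRing.Theory Num.Theory.
Local Open Scope ring_scope.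

Set Implicit Arguments.
Unset Strict Implicit.
Unset Printing Implicit Defensive.

Lemma rem_cat (x : nat) (s1 s2 : seq nat) :
  rem x (s1 ++ s2) = if x \in s1 then rem x s1 ++ s2 else s1 ++ rem x s2.
Proof.
elim: s1 => [|y s1 IH] //=; rewrite in_cons eq_sym.
by case: eqP => //= _; rewrite IH; case: (x \in s1).
Qed.

Lemma perm_rem (x : nat) (s t : seq nat) :
  perm_eq s t -> perm_eq (rem x s) (rem x t).
Proof.
move=> st; case xs: (x \in s).
  have xt : x \in t by rewrite -(perm_mem st).
  have := perm_to_rem xs; have := perm_to_rem xt => h1 h2.
  rewrite -(perm_cons x); rewrite perm_sym in h2.
  exact: perm_trans h2 (perm_trans st h1).
have xt : x \notin t by rewrite -(perm_mem st) xs.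
by rewrite !rem_id ?xs.
Qed.

Lemma geq_trans : transitive (ssrnat.geq : rel nat).
Proof. by move=> x y z h1 h2; exact: leq_trans h2 h1. Qed.
Lemma geq_anti : antisymmetric (ssrnat.geq : rel nat).
Proof. by move=> x y /andP[h1 h2]; apply/eqP; rewrite eqn_leq; apply/andP. Qed.

Lemma part_pos (la : Defs.partition) : all (fun x => 0 < x)%N la.
Proof. by case: la => s /= /andP[]. Qed.
Lemma part_sorted (la : Defs.partition) : sorted (ssrnat.geq : rel nat) la.
Proof. by case: la => s /= /andP[]. Qed.

Lemma part_eq (la mu : Defs.partition) : perm_eq la mu -> la = mu.
Proof.
move=> h; apply: val_inj => /=.
apply: (sorted_eq _ _ (part_sorted la) (part_sorted mu) h).
  by move=> x y z h1 h2; exact: leq_trans h2 h1.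
by move=> x y /andP[h1 h2]; apply/eqP; rewrite eqn_leq; apply/andP.
Qed.

Lemma topart_perm (s : seq nat) : perm_eq (topart s) [seq x <- s | (0 < x)%N].
Proof. by rewrite /topart /= perm_sort. Qed.

Lemma topartE (s : seq nat) (la : Defs.partition) :
  perm_eq [seq x <- s | (0 < x)%N] la -> topart s = la.
Proof. by move=> h; apply: part_eq; rewrite (perm_trans (topart_perm s)). Qed.

Lemma filter_pos (s : seq nat) : all (fun x => 0 < x)%N s ->
  [seq x <- s | (0 < x)%N] = s.
Proof. by move=> h; apply/all_filterP. Qed.

Lemma topartK (la : Defs.partition) : topart la = la.
Proof. by apply: topartE; rewrite filter_pos ?part_pos. Qed.

Lemma topart_perm_pos (s : seq nat) : all (fun x => 0 < x)%N s ->
  perm_eq (topart s) s.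
Proof. by move=> h; rewrite (perm_trans (topart_perm s)) // filter_pos. Qed.

Lemma all_pos_cat (s t : seq nat) : all (fun x => 0 < x)%N (s ++ t) =
  all (fun x => 0 < x)%N s && all (fun x => 0 < x)%N t.
Proof. by rewrite all_cat. Qed.

Lemma key_ins (la nu : Defs.partition) (i : nat) : (0 < i)%N ->
  (i \in pval la) && (topart (rem i la) == nu) = (la == topart (i :: nu)).
Proof.
move=> i0.
have posin : all (fun x => 0 < x)%N (i :: nu) by rewrite /= i0 part_pos.
apply/idP/idP.
  case/andP=> il /eqP <-; apply/eqP/esym/topartE.
  rewrite filter_pos; last by rewrite /= i0 (part_pos (topart (rem i la))).
  rewrite perm_sym (perm_trans (perm_to_rem il)) // perm_cons perm_sym.
  apply: topart_perm_pos; apply/allP => x /mem_rem; exact: (allP (part_pos la)).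
move/eqP=> ->.
have hp := topart_perm_pos posin.
rewrite (perm_mem hp) mem_head /=; apply/eqP/topartE.
rewrite filter_pos; last by apply/allP => x /mem_rem; rewrite (perm_mem hp); exact: (allP posin).
by have := perm_rem i hp; rewrite /= eqxx.
Qed.

Lemma perm_mid (l s : seq nat) x : perm_eq (l ++ x :: s) (x :: l ++ s).
Proof. by rewrite -cat1s perm_catCA. Qed.

Lemma big_cover (T : eqType) (V : zmodType) (s1 s2 : seq T) (G : T -> V) :
  uniq s1 -> uniq s2 ->
  {in s1, forall x, G x != 0 -> x \in s2} ->
  {in s2, forall x, G x != 0 -> x \in s1} ->
  \sum_(x <- s1) G x = \sum_(x <- s2) G x.
Proof.
move=> u1 u2 h1 h2.
have z s : \sum_(x <- s | G x == 0) G x = 0 by rewrite big1 // => x /eqP.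
rewrite (bigID (fun x => G x == 0)) /= (z s1) add0r.
rewrite [RHS](bigID (fun x => G x == 0)) /= (z s2) add0r.
rewrite -[LHS]big_filter -[RHS]big_filter; apply: perm_big; apply: uniq_perm; rewrite ?filter_uniq //.
move=> x; rewrite !mem_filter; apply/andP/andP=> -[gx xs]; split=> //.
  exact: h1.
exact: h2.
Qed.

Section Malg.
Variable R : realType.
Local Notation C := (R[i]).
Local Notation part := Defs.partition.

Lemma sum_msupp1 (p : Lam R) (F : part -> C) (mu : part) :
  (forall la, la != mu -> F la = 0) ->
  \sum_(la <- msupp p) p@_la * F la = p@_mu * F mu.
Proof.
move=> hF; case: (boolP (mu \in msupp p)) => hm.
  rewrite (bigD1_seq mu) //=; last exact: fset_uniq.
  rewrite big1 ?addr0 // => la hla.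
  by rewrite hF ?mulr0.
rewrite mcoeff_outdom // mul0r big1_seq // => la /andP[_ hla].
rewrite hF ?mulr0 //; apply: contraNneq hm => <-; exact: hla.
Qed.

Definition linF (f : part -> C) (p : Lam R) : C :=
  \sum_(la <- msupp p) p@_la * f la.

Lemma linF_sub f p (S : seq part) : uniq S -> {subset msupp p <= S} ->
  linF f p = \sum_(la <- S) p@_la * f la.
Proof.
move=> uS sub; apply: big_cover => //.
- by move=> la hla _; exact: sub.
- by move=> la _ h; rewrite -mcoeff_neq0; apply: contraNneq h => ->; rewrite mul0r.
Qed.

Lemma linFD f p q : linF f (p + q) = linF f p + linF f q.
Proof.
set S := undup (msupp p ++ msupp q ++ msupp (p + q)).
have uS : uniq S by apply: undup_uniq.
rewrite (@linF_sub _ p S) ?(@linF_sub _ q S) ?(@linF_sub _ (p + q) S) //.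
- by rewrite -big_split /=; apply: eq_bigr => la _; rewrite mcoeffD mulrDl.
- by move=> x hx; rewrite mem_undup !mem_cat hx ?orbT.
- by move=> x hx; rewrite mem_undup !mem_cat hx ?orbT.
- by move=> x hx; rewrite mem_undup !mem_cat hx ?orbT.
Qed.

Lemma linFZ f c p : linF f (c *: p) = c * linF f p.
Proof.
rewrite (@linF_sub _ (c *: p) (msupp p)) ?fset_uniq //.
  by rewrite /linF mulr_sumr; apply: eq_bigr => la _; rewrite mcoeffZ mulrA.
by move=> x; apply: (fsubsetP (msuppZ_le _ _)).
Qed.

Lemma linF0 f : linF f 0 = 0.
Proof. by rewrite /linF msupp0 big_nil. Qed.

Lemma linFB f p q : linF f (p - q) = linF f p - linF f q.
Proof.
by rewrite linFD -scaleN1r linFZ mulN1r.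
Qed.

Lemma linF_sum f (I : Type) (r : seq I) (F : I -> Lam R) :
  linF f (\sum_(x <- r) F x) = \sum_(x <- r) linF f (F x).
Proof.
elim: r => [|x r IH]; first by rewrite !big_nil linF0.
by rewrite !big_cons linFD IH.
Qed.

Lemma linFU f (la : part) : linF f << la >> = f la.
Proof.
by rewrite /linF msuppU oner_eq0 big_seq_fset1 mcoeffUU mul1r.
Qed.

Lemma ev_linF (p : Lam R) ys : ev p ys = linF (fun la => m_eval la ys) p.
Proof. by []. Qed.

End Malg.

Section Deriv.
Variable R : realType.
Local Notation C := (R[i]).
Local Notation part := Defs.partition.
Local Notation pos := (fun x : nat => (0 < x)%N).

Lemma mcoeff_sum (I : Type) (r : seq I) (F : I -> Lam R) k :
  (\sum_(x <- r) F x)@_k = \sum_(x <- r) (F x)@_k.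
Proof.
elim: r => [|x r IH]; first by rewrite !big_nil mcoeff0.
by rewrite !big_cons mcoeffD IH.
Qed.

Lemma Dsym_coef i (p : Lam R) nu : (0 < i)%N ->
  (Dsym i p)@_nu = (i`!)%:R * p@_(topart (i :: nu)).
Proof.
move=> i0; rewrite /Dsym mcoeff_sum.
rewrite (eq_bigr (fun la => p@_la *
   ((i`!)%:R * ((i \in pval la) && (topart (rem i la) == nu))%:R))); last first.
  move=> la _; rewrite mcoeffZ -mulrA; congr (_ * (_ * _)).
  by case: (i \in pval la); rewrite ?mcoeff0 // mcoeffU.
rewrite (@sum_msupp1 _ _ _ (topart (i :: nu))).
  by rewrite key_ins // eqxx mulr1 mulrC.
by move=> la hla; rewrite key_ins // (negPf hla) mulr0.
Qed.

Lemma Dsym_0 (p : Lam R) : Dsym 0 p = 0.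
Proof.
rewrite /Dsym big1 // => la _.
have -> : (0 \in pval la) = false.
  by apply/negP => h; have := allP (part_pos la) _ h.
by rewrite scaler0.
Qed.

Fact Dkey : unit. Proof. by []. Qed.
Definition DS := locked_with Dkey (@Dsym R).
Lemma DSE : @Dsym R = DS. Proof. by rewrite /DS unlock. Qed.

Lemma DS_coefE i (p : Lam R) nu :
  (DS i p)@_nu = if i == 0%N then 0 else (i`!)%:R * p@_(topart (i :: nu)).
Proof.
rewrite -DSE; case: eqP => [->|/eqP]; first by rewrite Dsym_0 mcoeff0.
by rewrite -lt0n; apply: Dsym_coef.
Qed.

Lemma DS_coef i (p : Lam R) nu : (0 < i)%N ->
  (DS i p)@_nu = (i`!)%:R * p@_(topart (i :: nu)).
Proof. by rewrite -DSE; apply: Dsym_coef. Qed.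

Lemma DS_0 (p : Lam R) : DS 0 p = 0.
Proof. by rewrite -DSE Dsym_0. Qed.

Lemma mcoeffDL (p q : Lam R) nu : (p + q)@_nu = p@_nu + q@_nu.
Proof. exact: mcoeffD. Qed.
Lemma mcoeffZL c (p : Lam R) nu : (c *: p)@_nu = c * p@_nu.
Proof. exact: mcoeffZ. Qed.
Lemma mcoeff0L nu : (0 : Lam R)@_nu = 0.
Proof. exact: mcoeff0. Qed.
Lemma mcoeffBL (p q : Lam R) nu : (p - q)@_nu = p@_nu - q@_nu.
Proof. exact: mcoeffB. Qed.

Lemma DSD i (p q : Lam R) : DS i (p + q) = DS i p + DS i q.
Proof.
apply/malgP => nu; rewrite mcoeffDL !DS_coefE.
case: eqP => _; first by rewrite addr0.
by rewrite mcoeffDL mulrDr.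
Qed.

Lemma DSZ i c (p : Lam R) : DS i (c *: p) = c *: DS i p.
Proof.
apply/malgP => nu; rewrite mcoeffZL !DS_coefE.
case: eqP => _; first by rewrite mulr0.
by rewrite mcoeffZL mulrCA.
Qed.

Lemma DS0 i : DS i (0 : Lam R) = 0.
Proof. by apply/malgP => nu; rewrite DS_coefE !mcoeff0L; case: eqP => _; rewrite ?mulr0. Qed.

Lemma DSB i (p q : Lam R) : DS i (p - q) = DS i p - DS i q.
Proof. by rewrite DSD -scaleN1r DSZ scaleN1r. Qed.

Lemma DS_sum i (I : Type) (r : seq I) (F : I -> Lam R) :
  DS i (\sum_(x <- r) F x) = \sum_(x <- r) DS i (F x).
Proof.
elim: r => [|x r IH]; first by rewrite !big_nil DS0.
by rewrite !big_cons DSD IH.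
Qed.

Definition Dl (l : seq nat) (p : Lam R) : Lam R := foldr DS p l.

Lemma Dl_coef l (p : Lam R) nu : all pos l ->
  (Dl l p)@_nu = (\prod_(i <- l) (i`!)%:R) * p@_(topart (l ++ nu)).
Proof.
elim: l nu => [|i l IH] nu /=.
  by rewrite big_nil mul1r topartK.
case/andP=> i0 hl; rewrite DS_coef // IH // big_cons -mulrA; congr (_ * (_ * _)).
congr (p@_ _); apply: topartE.
have posinu : all pos (i :: nu) by rewrite /= i0 part_pos.
rewrite filter_pos; last by rewrite all_cat hl (part_pos (topart _)).
apply: perm_trans (_ : perm_eq _ (i :: l ++ nu)) _.
  apply: perm_trans (perm_mid _ _ _); rewrite perm_cat2l.
  exact: topart_perm_pos.
rewrite perm_sym; apply: topart_perm_pos; rewrite /= i0 all_cat hl part_pos.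
by [].
Qed.

Lemma DS_Dl i l (p : Lam R) : all pos l -> DS i (Dl l p) = Dl l (DS i p).
Proof.
move=> hl; apply/malgP => nu; rewrite DS_coefE !Dl_coef // DS_coefE.
case: eqP => [_|/eqP i0]; first by rewrite mulr0.
rewrite mulrCA; congr (_ * (_ * p@_ _)).
have i0' : (0 < i)%N by rewrite lt0n.
apply: topartE; rewrite filter_pos; last first.
  by rewrite all_cat hl (part_pos (topart _)).
apply: perm_trans (_ : perm_eq _ (l ++ i :: nu)) _.
  rewrite perm_cat2l; apply: topart_perm_pos; by rewrite /= i0' part_pos.
rewrite perm_sym; apply: perm_trans (topart_perm_pos _) _.
  by rewrite /= i0' (part_pos (topart _)).
rewrite perm_sym; apply: perm_trans (perm_mid l nu i) _; rewrite perm_cons perm_sym.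
by apply: topart_perm_pos; rewrite all_cat hl part_pos.
Qed.

Lemma Dl_linear l c (p q : Lam R) : Dl l (c *: p + q) = c *: Dl l p + Dl l q.
Proof. by elim: l => [|i l IH] //=; rewrite IH DSD DSZ. Qed.

Definition lamk' (m : nat) (k : seq nat) : seq nat :=
  flatten [seq nseq ik.2 ik.1 | ik <- zip (iota m (size k)) k].
Definition lamk k := lamk' 1 k.

Lemma iter_foldr n i (q : Lam R) : iter n (DS i) q = foldr DS q (nseq n i).
Proof. elim: n => [|n IH]; first by [].
by rewrite /= IH. Qed.

Lemma Dpow_Dl k (p : Lam R) : Dpow k p = Dl (lamk k) p.
Proof.
rewrite /Dpow /Dl /lamk /lamk' DSE.
elim: (zip _ _) => [|ik z IH] //=.
by rewrite foldr_cat -IH iter_foldr.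
Qed.

Lemma count_lamk' x m k :
  count_mem x (lamk' m k) = if (m <= x)%N then nth 0%N k (x - m) else 0%N.
Proof.
elim: k m => [|y k IH] m; first by rewrite /lamk' /=; case: ifP => // _; rewrite nth_nil.
rewrite /lamk' /= count_cat -/(lamk' m.+1 k) IH count_nseq /=.
case: (ltngtP m x) => [mx|xm|<-].
- by rewrite mul0n add0n -(subnSK mx).
- by [].
- by rewrite mul1n addn0 subnn.
Qed.

Lemma count_lamk x k :
  count_mem x (lamk k) = if (1 <= x)%N then nth 0%N k (x - 1) else 0%N.
Proof. exact: count_lamk'. Qed.

Lemma all_pos_count (s : seq nat) : count_mem 0%N s = 0%N -> all pos s.
Proof.
move=> h; apply/allP => x hx; rewrite lt0n; apply/eqP => x0; subst x.
have : (0 < count_mem 0%N s)%N by rewrite -has_count has_pred1.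
by rewrite h.
Qed.

Lemma lamk_pos k : all pos (lamk k).
Proof. by apply: all_pos_count; rewrite count_lamk. Qed.

Definition bnd (p : Lam R) : nat :=
  (\max_(la <- msupp p) (size la + \max_(x <- pval la) x).+1)%N.

Lemma bnd_ge (p : Lam R) la : la \in msupp p ->
  (size la + \max_(x <- pval la) x < bnd p)%N.
Proof. by move=> h; rewrite /bnd; exact: (leq_bigmax_seq (F := fun la : part => (size la + \max_(x <- pval la) x).+1)%N). Qed.

Lemma bnd_part (p : Lam R) la x : la \in msupp p -> x \in pval la -> (x < bnd p)%N.
Proof.
move=> h hx; apply: leq_ltn_trans (bnd_ge h).
apply: leq_trans (leq_addl _ _).
exact: (leq_bigmax_seq (F := id)).
Qed.

Lemma bnd_size (p : Lam R) la : la \in msupp p -> (size la < bnd p)%N.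
Proof. by move=> h; apply: leq_ltn_trans (bnd_ge h); apply: leq_addr. Qed.

Lemma DS_big i (p : Lam R) : (bnd p <= i)%N -> DS i p = 0.
Proof.
move=> hi; apply/malgP => nu; rewrite DS_coefE mcoeff0L.
case: eqP => // /eqP i0; rewrite mcoeff_outdom ?mulr0 //.
apply/negP => h.
have : (i < bnd p)%N.
  apply: (bnd_part h); rewrite (perm_mem (topart_perm _)) mem_filter mem_head.
  by rewrite lt0n i0.
by rewrite ltnNge hi.
Qed.

End Deriv.

Section Shift.
Variable R : realType.
Local Notation C := (R[i]).
Local Notation part := Defs.partition.
Local Notation pos := (fun x : nat => (0 < x)%N).

Definition PS (t : seq nat) (ys : seq C) : C :=
  \sum_(al <- permutations t) \prod_(j < size ys) ys`_j ^+ nth 0%N al j.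

Lemma m_evalE (la : part) (ys : seq C) : m_eval la ys =
  if (size la <= size ys)%N then PS (pval la ++ nseq (size ys - size la) 0%N) ys else 0.
Proof. by []. Qed.

Lemma PS_perm t t' (ys : seq C) : perm_eq t t' -> PS t ys = PS t' ys.
Proof. by move=> h; apply: perm_big; apply: perm_permutations. Qed.

Lemma PS_cons t (a : C) (ys : seq C) : (0 < size t)%N ->
  PS t (a :: ys) = \sum_(x <- undup t) a ^+ x * PS (rem x t) ys.
Proof.
move=> h; rewrite /PS (perm_big _ (permutationsE h)) big_allpairs_dep.
apply: eq_bigr => x _; rewrite mulr_sumr; apply: eq_bigr => al _.
by rewrite /= big_ord_recl /=; congr (_ * _); apply: eq_bigr => j _; rewrite lift0.
Qed.

Lemma size_topart_rem (la : part) x : x \in pval la ->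
  size (topart (rem x la)) = (size la).-1.
Proof.
move=> hx; rewrite (perm_size (topart_perm _)) filter_pos ?size_rem //.
by apply/allP => y /mem_rem; apply: (allP (part_pos la)).
Qed.

Lemma stepB (la : part) x (ys : seq C) : x \in pval la -> (size la <= (size ys).+1)%N ->
  PS (rem x (pval la ++ nseq ((size ys).+1 - size la) 0%N)) ys =
  m_eval (topart (rem x la)) ys.
Proof.
move=> hx hl; rewrite rem_cat hx m_evalE size_topart_rem //.
have l0 : (0 < size la)%N by case: (pval la) hx.
have -> : ((size la).-1 <= size ys)%N by rewrite -ltnS prednK.
have -> : (size ys - (size la).-1 = (size ys).+1 - size la)%N.
  by rewrite -subn1 subnBA // addn1.
apply: PS_perm; rewrite perm_cat2r perm_sym; apply: topart_perm_pos.
by apply/allP => y /mem_rem; apply: (allP (part_pos la)).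
Qed.

Lemma sum_undup_iota (la : part) N (G : nat -> C) :
  (forall x, x \in pval la -> (x < N)%N) ->
  \sum_(x <- undup la) G x = \sum_(i < N) (if (i : nat) \in pval la then G i else 0).
Proof.
move=> hN; rewrite -(big_mkord xpredT (fun i : nat => if i \in pval la then G i else 0)).
rewrite (eq_big_seq (fun i => if i \in pval la then G i else 0)); last first.
  by move=> x; rewrite mem_undup => ->.
apply: big_cover; rewrite ?undup_uniq ?iota_uniq //.
  by move=> x; rewrite mem_undup mem_iota leq0n subn0 /= => hx _; exact: hN.
move=> x _; case: ifP => [hx _|_]; [by rewrite mem_undup | by rewrite eqxx].
Qed.

Lemma m_eval_cons (la : part) (a : C) (ys : seq C) N : (forall x, x \in pval la -> (x < N)%N) ->
  m_eval la (a :: ys) = m_eval la ys +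
    \sum_(i < N) a ^+ i * (if (i : nat) \in pval la then m_eval (topart (rem (i : nat) la)) ys else 0).
Proof.
move=> hN.
have -> : \sum_(i < N) a ^+ i * (if (i : nat) \in pval la then m_eval (topart (rem (i : nat) la)) ys else 0)
  = \sum_(x <- undup la) a ^+ x * m_eval (topart (rem x la)) ys.
  rewrite (sum_undup_iota (fun x => a ^+ x * m_eval (topart (rem x la)) ys) hN).
  by apply: eq_bigr => i _; case: ifP; rewrite ?mulr0.
have h0 : 0%N \notin pval la by apply/negP => h; have := allP (part_pos la) _ h.
case: (ltngtP (size la) (size ys).+1) => hl.
-
  have hl' : (size la <= size ys)%N by [].
  rewrite m_evalE /= ltnW // m_evalE hl'.
  set t := (pval la ++ _).
  have st : (0 < size t)%N by rewrite size_cat size_nseq subSn // addnS.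
  rewrite PS_cons //.
  have pu : perm_eq (undup t) (0%N :: undup la).
    apply: uniq_perm; rewrite ?undup_uniq //=.
      by rewrite mem_undup h0 undup_uniq.
    move=> x; rewrite !mem_undup in_cons mem_cat mem_nseq subSn //= orbC.
    by rewrite mem_undup.
  rewrite (perm_big _ pu) big_cons expr0 mul1r; congr (_ + _).
    rewrite /t rem_cat (negPf h0) subSn //=.
  apply: eq_big_seq => x; rewrite mem_undup => hx.
  by rewrite stepB // ltnW.
-
  rewrite !m_evalE /= leqNgt hl /= leqNgt ltnW //= big1_seq ?addr0 // => x.
  rewrite mem_undup => /andP[_ hx].
  rewrite m_evalE size_topart_rem // ifN ?mulr0 //.
  by rewrite -ltnNge -ltnS prednK //; case: (pval la) hx.
-
  rewrite m_evalE /= hl leqnn subnn cats0 m_evalE hl ltnn add0r.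
  rewrite PS_cons ?hl //; apply: eq_big_seq => x; rewrite mem_undup => hx.
  have := @stepB la x ys hx; rewrite hl leqnn subnn cats0 => -> //.
Qed.

End Shift.

Section Shift2.
Variable R : realType.
Local Notation C := (R[i]).
Local Notation part := Defs.partition.
Local Notation pos := (fun x : nat => (0 < x)%N).

Fact EVkey : unit. Proof. by []. Qed.
Definition EV := locked_with EVkey (@ev R).
Lemma EVE : @ev R = EV. Proof. by rewrite /EV unlock. Qed.

Lemma EVD p q ys : EV (p + q) ys = EV p ys + EV q ys.
Proof. by rewrite -EVE !ev_linF linFD. Qed.
Lemma EVZ c p ys : EV (c *: p) ys = c * EV p ys.
Proof. by rewrite -EVE !ev_linF linFZ. Qed.
Lemma EVB p q ys : EV (p - q) ys = EV p ys - EV q ys.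
Proof. by rewrite -EVE !ev_linF linFB. Qed.
Lemma EV0 ys : EV 0 ys = 0.
Proof. by rewrite -EVE ev_linF linF0. Qed.
Lemma EV_sum (I : Type) (r : seq I) (F : I -> Lam R) ys :
  EV (\sum_(x <- r) F x) ys = \sum_(x <- r) EV (F x) ys.
Proof. by rewrite -EVE ev_linF linF_sum. Qed.

Lemma fact_neq0 i : ((i`!)%:R : C) != 0.
Proof. by rewrite pnatr_eq0 -lt0n fact_gt0. Qed.

Lemma EV_DS i (p : Lam R) ys : EV (DS i p) ys =
  \sum_(la <- msupp p) p@_la * ((i`!)%:R *
     (if i \in pval la then m_eval (topart (rem i la)) ys else 0)).
Proof.
rewrite -EVE -DSE /Dsym ev_linF linF_sum; apply: eq_bigr => la _.
rewrite linFZ -mulrA; congr (_ * (_ * _)).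
by case: ifP => _; rewrite ?linFU ?linF0.
Qed.

Lemma EV_cons (p : Lam R) (a : C) (ys : seq C) N : (bnd p <= N)%N ->
  EV p (a :: ys) = EV p ys + \sum_(i < N) a ^+ i / (i`!)%:R * EV (DS i p) ys.
Proof.
move=> hN.
have -> : \sum_(i < N) a ^+ i / (i`!)%:R * EV (DS i p) ys =
   \sum_(i < N) \sum_(la <- msupp p) p@_la * (a ^+ i *
     (if (i : nat) \in pval la then m_eval (topart (rem (i : nat) la)) ys else 0)).
  apply: eq_bigr => i _; rewrite EV_DS mulr_sumr; apply: eq_bigr => la _.
  rewrite mulrCA; congr (_ * _).
  by rewrite mulrA mulfVK ?fact_neq0.
rewrite exchange_big /= -EVE !ev_linF /linF -big_split /=.
apply: eq_big_seq => la hla; rewrite -mulr_sumr -mulrDr; congr (_ * _).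
apply: m_eval_cons => x hx; apply: leq_trans hN; exact: bnd_part hla hx.
Qed.

Lemma poly_zero (N : nat) (x : nat -> C) :
  (forall a : C, \sum_(j < N) x j * a ^+ j = 0) -> forall j, (j < N)%N -> x j = 0.
Proof.
move=> h j hj.
have P0 : \poly_(j < N) x j = 0.
  apply/eqP; apply: contraT => hP.
  have := max_poly_roots hP (rs := [seq (n%:R : C) | n <- iota 0 N]).
  rewrite size_map size_iota => H.
  have : (N < N)%N.
    apply: leq_trans (size_poly _ _); apply: H.
      by apply/allP => r /mapP [n _ ->]; rewrite /root horner_poly h.
    rewrite map_inj_uniq ?iota_uniq // => m n /eqP.
    by rewrite eqr_nat => /eqP.
  by rewrite ltnn.
by have := congr1 (fun q : {poly C} => q`_j) P0; rewrite coef_poly hj coef0.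
Qed.

Lemma PS_nil : PS [::] ([::] : seq C) = 1.
Proof. by rewrite /PS /= big_cons big_nil big_ord0 addr0. Qed.

Definition emp : part := topart [::].

Lemma EV_nil (q : Lam R) : EV q [::] = q@_emp.
Proof.
rewrite -EVE ev_linF /linF (@sum_msupp1 _ _ _ emp).
  by rewrite m_evalE /= PS_nil mulr1.
move=> la hla; rewrite m_evalE /= leqn0 ifN //; apply: contra hla => /eqP/size0nil h.
by apply/eqP; apply: val_inj; case: la h => s ps /= ->.
Qed.

Lemma EV_inj (q : Lam R) : (forall ys, EV q ys = 0) -> q = 0.
Proof.
suff H : forall n (q : Lam R), (forall la, la \in msupp q -> (sumn la < n)%N) ->
    (forall ys, EV q ys = 0) -> q = 0.
  apply: (H (\max_(la <- msupp q) (sumn la).+1)%N) => la hla.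
  exact: (leq_bigmax_seq (F := fun la : part => (sumn la).+1)).
elim=> [|n IH] {}q hs hev.
  apply/malgP => la; rewrite mcoeff0L mcoeff_outdom //; apply/negP => h.
  by have := hs _ h.
have hD : forall i, (0 < i)%N -> DS i q = 0.
  move=> i i0; apply: IH.
    move=> nu; rewrite -mcoeff_neq0 DS_coef // mulf_eq0 negb_or => /andP[_].
    rewrite mcoeff_neq0 => /hs.
    rewrite (perm_sumn (topart_perm_pos _)) /=; last by rewrite i0 part_pos.
    by lia.
  move=> ys; set N := maxn (bnd q) i.+1.
  have Hs : forall a : C, \sum_(j < N) EV (DS j q) ys / (j`!)%:R * a ^+ j = 0.
    move=> a; have := EV_cons a ys (leq_maxl (bnd q) i.+1).
    rewrite !hev add0r => /esym H; rewrite -[RHS]H; apply: eq_bigr => j _.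
    by rewrite mulrC mulrA mulrAC.
  have := @poly_zero N (fun j => EV (DS j q) ys / (j`!)%:R) Hs i; rewrite /N leq_max ltnSn orbT => /(_ isT) /eqP.
  by rewrite mulf_eq0 invr_eq0 (negPf (fact_neq0 i)) orbF => /eqP.
apply/malgP => la; rewrite mcoeff0L.
case: (boolP (size la == 0%N)) => hl.
  have -> : la = emp by apply: val_inj; case: la hl => s ps /= /eqP/size0nil ->.
  by rewrite -EV_nil hev.
have [i hi] : exists i, i \in pval la.
  by case: (pval la) hl => [|x s] // _; exists x; rewrite mem_head.
have i0 : (0 < i)%N by apply: (allP (part_pos la)).
have hk := key_ins la (topart (rem i la)) i0; rewrite hi eqxx andbT in hk.
have {}hk := esym hk.
have := DS_coef q (topart (rem i la)) i0; rewrite hD // mcoeff0L -(eqP hk).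
by move/esym/eqP; rewrite mulf_eq0 (negPf (fact_neq0 i)) /= => /eqP.
Qed.

Lemma EshiftE (a : C) (p : Lam R) N : (bnd p <= N)%N ->
  Eshift a p = p + \sum_(i < N) (a ^+ i / (i`!)%:R) *: DS i p.
Proof.
move=> hN; set q0 := (X in _ = X).
have hq0 : forall ys, ev q0 ys = ev p (a :: ys).
  move=> ys; rewrite EVE (EV_cons a ys hN) EVD EV_sum; congr (_ + _).
  by apply: eq_bigr => i _; rewrite EVZ.
have := epsilon_spec (inhabits 0) (fun q : Lam R => forall ys, ev q ys = ev p (a :: ys))
  (ex_intro _ q0 hq0).
rewrite -/(Eshift a p) => he.
apply/eqP; rewrite -subr_eq0; apply/eqP; apply: EV_inj => ys.
by rewrite EVB -!EVE he hq0 subrr.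
Qed.


End Shift2.

Section Kseq.
Local Notation part := Defs.partition.
Local Notation pos := (fun x : nat => (0 < x)%N).

Lemma topart_perm_eq (s t : seq nat) :
  perm_eq [seq x <- s | (0 < x)%N] [seq x <- t | (0 < x)%N] -> topart s = topart t.
Proof.
by move=> h; apply: topartE; apply: perm_trans h _; rewrite perm_sym topart_perm.
Qed.

Definition kpart (k : seq nat) : part := topart (lamk k).

Lemma canon_nth (k : seq nat) : k != [::] -> canon k = (nth 0%N k (size k).-1 != 0%N).
Proof. by case: k => [|x s] //= _; rewrite /canon nth_last /=. Qed.

Lemma count_perm_eq (s t : seq nat) :
  (forall x, count_mem x s = count_mem x t) -> perm_eq s t.
Proof. by move=> h; apply/allP => x _ /=; rewrite h. Qed.

Lemma kpart_inj (k1 k2 : seq nat) : canon k1 -> canon k2 -> kpart k1 = kpart k2 -> k1 = k2.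
Proof.
move=> c1 c2 e.
have hp : perm_eq (lamk k1) (lamk k2).
  apply: perm_trans (_ : perm_eq _ (kpart k1)) _.
    by rewrite perm_sym; apply: topart_perm_pos; apply: lamk_pos.
  by rewrite e; apply: topart_perm_pos; apply: lamk_pos.
have hn : forall j, nth 0%N k1 j = nth 0%N k2 j.
  move=> j; move/permP: hp => /(_ (pred1 j.+1)).
  by rewrite !count_lamk /= subn1.
have nz : forall k, canon k -> k != [::] -> nth 0%N k (size k).-1 != 0%N.
  by move=> k ck kn; rewrite -canon_nth.
have hs : size k1 = size k2.
  case: (ltngtP (size k1) (size k2)) => // h.
    have k2n : k2 != [::] by case: k2 h {nz hn c2 e hp}.
    have := nz _ c2 k2n; rewrite -hn nth_default //.
    by rewrite -ltnS prednK // (leq_ltn_trans _ h).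
  have k1n : k1 != [::] by case: k1 h {nz hn c1 e hp}.
  have := nz _ c1 k1n; rewrite hn nth_default //.
  by rewrite -ltnS prednK // (leq_ltn_trans _ h).
by apply: (eq_from_nth (x0 := 0%N) hs) => j _; apply: hn.
Qed.

Lemma part_le_head (la : part) x : x \in pval la -> (x <= head 0%N la)%N.
Proof.
have := part_sorted la; case: (pval la) => [|y s] //= hs.
rewrite in_cons => /orP[/eqP -> //|hx].
have := order_path_min _ hs => /(_ _) /allP.
move=> /(_ (fun a b c h1 h2 => leq_trans h2 h1)) /(_ x hx) //.
Qed.

Definition kof (la : part) : seq nat := mkseq (fun j => count_mem j.+1 (pval la)) (head 0%N la).

Lemma kofP (la : part) : canon (kof la) /\ kpart (kof la) = la.
Proof.
have hcount : forall x, count_mem x (lamk (kof la)) = count_mem x (pval la).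
  move=> x; rewrite count_lamk; case: x => [|x] /=.
    apply/esym/eqP; rewrite -leqn0 leqNgt -has_count has_pred1.
    by apply/negP => h; have := allP (part_pos la) _ h.
  rewrite subn1 /= /kof; case: (ltnP x (head 0%N la)) => hx.
    by rewrite nth_mkseq.
  rewrite nth_default ?size_mkseq //; apply/esym/eqP; rewrite -leqn0 leqNgt -has_count has_pred1.
  by apply/negP => h; have := part_le_head h; rewrite leqNgt ltnS hx.
split.
  rewrite /kof; case E: (pval la) => [|y s] //=.
  have y0 : (0 < y)%N by have := allP (part_pos la) y; rewrite E mem_head => /(_ isT).
  rewrite canon_nth; last by rewrite -size_eq0 size_mkseq -lt0n y0.
  by rewrite size_mkseq nth_mkseq ?prednK // eqxx add1n.
apply: topartE; rewrite filter_pos ?lamk_pos //.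
by apply: count_perm_eq.
Qed.

Fixpoint allseqs (B n : nat) : seq (seq nat) :=
  if n is n'.+1 then [::] :: [seq x :: t | x <- iota 0 B.+1, t <- allseqs B n']
  else [:: [::]].

Lemma allseqsP B n (t : seq nat) : (size t <= n)%N -> all (fun x => x <= B)%N t ->
  t \in allseqs B n.
Proof.
elim: n t => [|n IH] [|x t].
- by rewrite inE.
- by [].
- by move=> _ _; rewrite /allseqs -/allseqs in_cons eqxx.
move=> hs /andP[hx ht]; rewrite /allseqs -/allseqs in_cons; apply/orP; right.
apply: allpairs_f.
  by rewrite mem_iota ltnS hx.
exact: IH.
Qed.

End Kseq.

Section Main.
Variable R : realType.
Local Notation C := (R[i]).
Local Notation part := Defs.partition.
Local Notation pos := (fun x : nat => (0 < x)%N).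

Lemma Dpow_coef k (p : Lam R) nu :
  (Dpow k p)@_nu = (\prod_(i <- lamk k) (i`!)%:R) * p@_(topart (lamk k ++ nu)).
Proof. by rewrite Dpow_Dl Dl_coef // lamk_pos. Qed.

Lemma W_neq0 (l : seq nat) : (\prod_(i <- l) ((i`!)%:R : C)) != 0.
Proof. by rewrite prodf_seq_neq0; apply/allP => i _ /=; apply: fact_neq0. Qed.

Lemma neq0_coef (q : Lam R) : q != 0 -> exists nu, q@_nu != 0.
Proof.
move=> hq; apply: NNPP => H; move/negP: hq; apply; apply/eqP/malgP => nu.
rewrite mcoeff0L; apply/eqP; apply: contraT => h; case: H; by exists nu.
Qed.

Lemma candidate k (p : Lam R) : canon k -> Dpow k p != 0 ->
  k \in allseqs (bnd p) (bnd p).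
Proof.
move=> ck /neq0_coef [nu]; rewrite Dpow_coef mulf_eq0 negb_or => /andP[_].
rewrite mcoeff_neq0 => hla.
set la := topart _ in hla.
have hmem : forall x, x \in lamk k -> x \in pval la.
  move=> x hx; rewrite (perm_mem (topart_perm_pos _)) ?mem_cat ?hx //.
  by rewrite all_cat lamk_pos part_pos.
have hsz : (size (lamk k) <= size la)%N.
  rewrite (perm_size (topart_perm_pos _)) ?size_cat ?leq_addr //.
  by rewrite all_cat lamk_pos part_pos.
apply: allseqsP.
  case E: k ck => [|y s] // ck.
  rewrite -E; apply: ltnW; apply: (bnd_part hla); apply: hmem.
  rewrite -has_pred1 has_count count_lamk (_ : 1 <= size k)%N ?E //=.
  by move: ck; rewrite canon_nth // subn1 lt0n.
apply/allP => x /(nthP 0%N) [j hj <-].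
have := count_lamk j.+1 k; rewrite /= subn1 /= => <-.
apply: ltnW; apply: leq_ltn_trans (count_size _ _) _.
exact: leq_ltn_trans hsz (bnd_size hla).
Qed.

Variable theta : Lam R -> Lam R.
Hypothesis htheta : linear theta.

Lemma th0 : theta 0 = 0.
Proof.
have := htheta 1 0 0; rewrite !scale1r addr0 => h.
by apply: (addrI (theta 0)); rewrite addr0 -h.
Qed.
Lemma thD p q : theta (p + q) = theta p + theta q.
Proof. by have := htheta 1 p q; rewrite !scale1r. Qed.
Lemma thZ c p : theta (c *: p) = c *: theta p.
Proof. by have := htheta c p 0; rewrite !addr0 th0 addr0. Qed.
Lemma th_sum (I : Type) (r : seq I) (F : I -> Lam R) :
  theta (\sum_(x <- r) F x) = \sum_(x <- r) theta (F x).
Proof.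
elim: r => [|x r IH]; first by rewrite !big_nil th0.
by rewrite !big_cons thD IH.
Qed.


Lemma DS_Dpow i k (q : Lam R) : DS i (Dpow k q) = Dpow k (DS i q).
Proof. by rewrite !Dpow_Dl DS_Dl // lamk_pos. Qed.

Lemma malgU_scale (c : C) (la : part) : << c *g la >> = c *: (<< la >> : Lam R).
Proof.
apply/malgP => nu; rewrite mcoeffZL !mcoeffU.
by case: (la == nu); rewrite ?mulr1 ?mulr0.
Qed.

Section Forward.
Hypothesis H : forall a p, Eshift a (theta p) = theta (Eshift a p).

Lemma comm_DS i p : DS i (theta p) = theta (DS i p).
Proof.
case: (posnP i) => [->|i0]; first by rewrite !DS_0 th0.
set N := maxn (bnd p) (maxn (bnd (theta p)) i.+1).
have hN1 : (bnd p <= N)%N by rewrite leq_max leqnn.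
have hN2 : (bnd (theta p) <= N)%N by rewrite !leq_max leqnn orbT.
have hN3 : (i < N)%N by rewrite !leq_max ltnSn !orbT.
have hd : forall a : C,
    \sum_(j < N) (a ^+ j / (j`!)%:R) *: (DS j (theta p) - theta (DS j p)) = 0.
  move=> a; have := H a p.
  rewrite (EshiftE a hN2) (EshiftE a hN1) thD th_sum => /addrI e.
  rewrite (eq_bigr (fun j : 'I_N => (a ^+ j / (j`!)%:R) *: DS j (theta p) -
                                    theta ((a ^+ j / (j`!)%:R) *: DS j p))).
    by rewrite sumrB e subrr.
  by move=> j _; rewrite scalerBr thZ.
apply/malgP => nu; apply/eqP; rewrite -subr_eq0; apply/eqP.
have hx : forall a : C, \sum_(j < N)
    ((DS j (theta p))@_nu - (theta (DS j p))@_nu) / (j`!)%:R * a ^+ j = 0.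
  move=> a; have := congr1 (mcoeff nu) (hd a); rewrite mcoeff_sum mcoeff0L => e.
  rewrite -[RHS]e; apply: eq_bigr => j _; rewrite mcoeffZL mcoeffBL.
  by rewrite mulrC mulrA mulrAC.
have := @poly_zero R N (fun j => ((DS j (theta p))@_nu - (theta (DS j p))@_nu) / (j`!)%:R) hx i hN3.
by move/eqP; rewrite mulf_eq0 invr_eq0 (negPf (fact_neq0 R i)) orbF => /eqP.
Qed.

Lemma comm_Dl l p : Dl l (theta p) = theta (Dl l p).
Proof. by elim: l => [|i l IH] //=; rewrite IH comm_DS. Qed.

End Forward.

Definition cT (k : seq nat) : C :=
  (theta << kpart k >>)@_emp / \prod_(i <- lamk k) (i`!)%:R.

Lemma termE k (p : Lam R) mu : canon k ->
  (cT k *: Dpow k p)@_mu = p@_(topart (kpart k ++ mu)) * (theta << kpart k >>)@_emp.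
Proof.
move=> ck; rewrite mcoeffZL Dpow_coef /cT.
have -> : topart (lamk k ++ mu) = topart (kpart k ++ mu).
  apply: topart_perm_eq; rewrite !filter_pos ?all_cat ?lamk_pos ?part_pos //.
  by rewrite perm_cat2r perm_sym topart_perm_pos // lamk_pos.
by rewrite mulrA mulfVK ?W_neq0 // mulrC.
Qed.

Lemma forward (H : forall a p, Eshift a (theta p) = theta (Eshift a p)) (p : Lam R) :
  exists s : seq (seq nat),
    [/\ uniq s, all canon s,
        (forall k, canon k -> cT k *: Dpow k p != 0 -> k \in s) &
        theta p = \sum_(k <- s) cT k *: Dpow k p].
Proof.
set s := undup [seq k <- allseqs (bnd p) (bnd p) | canon k && (cT k *: Dpow k p != 0)].
have hs : forall k, k \in s -> canon k /\ cT k *: Dpow k p != 0.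
  by move=> k; rewrite mem_undup mem_filter => /andP[/andP[-> ->]].
exists s; split.
- exact: undup_uniq.
- by apply/allP => k /hs [].
- move=> k ck hk; rewrite mem_undup mem_filter ck hk /=; apply: candidate ck _.
  by apply: contraNneq hk => ->; rewrite scaler0.
apply/malgP => mu.
pose T := fun la : part => (theta << la >>)@_emp.
pose Hf := fun la : part => p@_(topart (la ++ mu)) * T la.
have hR : (\sum_(k <- s) cT k *: Dpow k p)@_mu = \sum_(la <- map kpart s) Hf la.
  rewrite mcoeff_sum big_map; apply: eq_big_seq => k hk.
  by rewrite termE //; case: (hs k hk).
set r := Dl mu p.
have hrc : forall la, r@_la = (\prod_(i <- mu) (i`!)%:R) * p@_(topart (la ++ mu)).
  move=> la; rewrite /r Dl_coef ?part_pos //; congr (_ * p@_ _).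
  by apply: topart_perm_eq; rewrite !filter_cat perm_catC.
have hL : (theta p)@_mu = \sum_(la <- msupp r) Hf la.
  have e1 := Dl_coef (theta p) emp (part_pos mu).
  have hme : topart (mu ++ emp) = mu by apply: topartE; rewrite /= cats0 filter_pos ?part_pos.
  rewrite hme comm_Dl // -/r {1}(monalgE r) th_sum mcoeff_sum in e1.
  apply: (mulfI (W_neq0 mu)); rewrite -e1 mulr_sumr; apply: eq_bigr => la _.
  by rewrite malgU_scale thZ mcoeffZL hrc /Hf /T mulrA.
rewrite hL hR; apply: big_cover.
- exact: fset_uniq.
- rewrite map_inj_in_uniq ?undup_uniq // => k1 k2 h1 h2.
  by apply: kpart_inj; [case: (hs k1 h1) | case: (hs k2 h2)].
- move=> la _ hH; have [ck ek] := kofP la.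
  have hne : cT (kof la) *: Dpow (kof la) p != 0.
    apply: contra hH => /eqP h0.
    by have := congr1 (mcoeff mu) h0; rewrite termE // mcoeff0L ek /Hf /T => ->.
  rewrite -ek; apply: map_f; rewrite mem_undup mem_filter ck hne /=.
  by apply: candidate ck _; apply: contraNneq hne => ->; rewrite scaler0.
- move=> la _ hH; rewrite -mcoeff_neq0 hrc mulf_neq0 ?W_neq0 //.
  by move: hH; rewrite mulf_eq0 negb_or => /andP[].
Qed.

Section Backward.
Variable c : seq nat -> C.
Hypothesis hc : forall p : Lam R, exists s : seq (seq nat),
      [/\ uniq s, all canon s,
          (forall k, canon k -> c k *: Dpow k p != 0 -> k \in s) &
          theta p = \sum_(k <- s) c k *: Dpow k p].

Lemma comm_DS2 i p : DS i (theta p) = theta (DS i p).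
Proof.
have [s [us cs hs ep]] := hc p.
have [s' [us' cs' hs' ep']] := hc (DS i p).
rewrite ep ep' DS_sum.
rewrite (eq_bigr (fun k => c k *: Dpow k (DS i p))); last first.
  by move=> k _; rewrite DSZ DS_Dpow.
apply: big_cover => // k hk hne.
  by apply: hs' => //; apply: (allP cs).
apply: hs; first by apply: (allP cs').
apply: contraNneq hne => h0.
by rewrite -DS_Dpow -DSZ h0 DS0.
Qed.

Lemma backward a p : Eshift a (theta p) = theta (Eshift a p).
Proof.
have h1 : (bnd (theta p) <= maxn (bnd (theta p)) (bnd p))%N by rewrite leq_maxl.
have h2 : (bnd p <= maxn (bnd (theta p)) (bnd p))%N by rewrite leq_maxr.
rewrite (EshiftE a h1) (EshiftE a h2) thD th_sum; congr (_ + _).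
by apply: eq_bigr => i _; rewrite thZ comm_DS2.
Qed.

End Backward.

End Main.

Unset Implicit Arguments.
Set Strict Implicit.

Theorem mainTheorem7 (R : realType) (theta : Lam R -> Lam R)
  (htheta : linear theta) :
  (forall (a : R[i]) (p : Lam R), Eshift a (theta p) = theta (Eshift a p)) <->
  exists c : seq nat -> R[i],
    forall p : Lam R, exists s : seq (seq nat),
      [/\ uniq s, all canon s,
          (forall k, canon k -> c k *: Dpow k p != 0 -> k \in s) &
          theta p = \sum_(k <- s) c k *: Dpow k p].
Proof.
split.
  by move=> H; exists (cT theta); apply: forward.
by case=> c hc a p; apply: (backward htheta hc).
Qed.
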